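(* Let $K$ be a field of characteristic $\neq 2$ and let $\mathcal C$ be a 3-dimensional EACP over $K$ (natural basis $\{h_1,h_2,r\}$) with $\dim\mathcal C^2=1$. Then $\mathcal C$ is isomorphic to one of the following pairwise non-isomorphic algebras with basis $\{h_1,h_2,r\}$, in each of which $rh_i=h_ir$ ($i=1,2$) and all products not listed are zero: $\mathcal C_1$: $h_1r=r$; $\mathcal C_2$: $h_1r=h_2$; $\mathcal C_3$: $h_1r=h_1+r$.
   Context: An EACP over a field $K$ (characteristic $\neq 2$) is a $K$-algebra $\mathcal C$ with a basis $\{h_1,\dots,h_n,r\}$ (called a natural basis) whose multiplication is determined by bilinearity from $$h_ir=rh_i=\tfrac12\Big(\sum_{j=1}^n a_{ij}h_j+b_ir\Big),\qquad h_ih_j=0\ (i,j=1,\dots,n),\qquad rr=0,$$ for some constants $a_{ij},b_i\in K$. $\mathcal C^2$ denotes the span of all products $xy$, $x,y\in\mathcal C$. Isomorphism means algebra isomorphism. *)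

(* Defs.v *)
From HB Require Import structures.
From mathcomp Require Import all_boot all_order all_algebra.
Set Implicit Arguments. Unset Strict Implicit. Unset Printing Implicit Defensive.
Import GRing.Theory.
Local Open Scope ring_scope.

(* A finite-dimensional K-algebra on K^n (row vectors) given by structure
   constants: c i j = e_i * e_j, where e_k is the k-th standard basis vector. *)
Definition strc (K : fieldType) (n : nat) := 'I_n -> 'I_n -> 'rV[K]_n.

Definition ebasis {K : fieldType} {n : nat} (k : 'I_n) : 'rV[K]_n := delta_mx 0 k.

Definition mulS (K : fieldType) (n : nat) (c : strc K n) (u v : 'rV[K]_n) : 'rV[K]_n :=
  \sum_(i < n) \sum_(j < n) (u 0 i * v 0 j) *: c i j.

(* 3-dimensional EACP with natural basis h_1 = e_0, h_2 = e_1, r = e_2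
   (the basis vector h_j for j : 'I_2 is e_(lift ord_max j)). *)
Definition eacp_hr (K : fieldType) (a : 'I_2 -> 'I_2 -> K) (b : 'I_2 -> K)
    (i : 'I_2) : 'rV[K]_3 :=
  2^-1 *: (\sum_(j < 2) a i j *: ebasis (lift ord_max j) + b i *: ebasis ord_max).

Definition eacp3 (K : fieldType) (a : 'I_2 -> 'I_2 -> K) (b : 'I_2 -> K) : strc K 3 :=
  fun i j =>
    match unlift ord_max i, unlift ord_max j with
    | Some i', None => eacp_hr a b i'   (* h_i r *)
    | None, Some j' => eacp_hr a b j'   (* r h_j *)
    | _, _ => 0                          (* h_i h_j = 0, r r = 0 *)
    end.

Definition sq_dim1 (K : fieldType) (n : nat) (c : strc K n) : Prop :=
  exists w : 'rV[K]_n, w != 0 /\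
    (forall x y, exists k : K, mulS c x y = k *: w) /\
    (exists x y, mulS c x y != 0).

Definition alg_iso (K : fieldType) (n : nat) (c d : strc K n) : Prop :=
  exists f : 'M[K]_n, f \in unitmx /\
    forall x y, mulS d (x *m f) (y *m f) = mulS c x y *m f.

(* the algebra with h_1 r = r h_1 = w (indices: h_1 = 0, h_2 = 1, r = 2),
   all other basis products zero *)
Definition h1r_alg (K : fieldType) (w : 'rV[K]_3) : strc K 3 :=
  fun i j =>
    if ((val i == 0%N) && (val j == 2%N)) || ((val i == 2%N) && (val j == 0%N))
    then w else 0.

Definition h1 (K : fieldType) : 'rV[K]_3 := @ebasis K 3 0.
Definition h2 (K : fieldType) : 'rV[K]_3 := @ebasis K 3 1.
Definition rr (K : fieldType) : 'rV[K]_3 := @ebasis K 3 2.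

Definition C1 (K : fieldType) : strc K 3 := h1r_alg (rr K).
Definition C2 (K : fieldType) : strc K 3 := h1r_alg (h2 K).
Definition C3 (K : fieldType) : strc K 3 := h1r_alg (h1 K + rr K).

(* Main.v *)
Set Warnings "-notation-overridden,-ambiguous-paths".
Require Import Defs.
From HB Require Import structures.
From mathcomp Require Import all_boot all_order all_algebra.
From mathcomp Require Import ring.
Set Implicit Arguments. Unset Strict Implicit.
Import GRing.Theory.
Local Open Scope ring_scope.
Definition i0 : 'I_3 := @Ordinal 3 0 isT.
Definition i1 : 'I_3 := @Ordinal 3 1 isT.
Definition i2 : 'I_3 := @Ordinal 3 2 isT.
Lemma ord3P (P : 'I_3 -> Prop) : P i0 -> P i1 -> P i2 -> forall j, P j.
Proof.
move=> H0 H1 H2 [[|[|[|j]]] Hj] //.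
- by rewrite (_ : Ordinal Hj = i0) //; apply: val_inj.
- by rewrite (_ : Ordinal Hj = i1) //; apply: val_inj.
- by rewrite (_ : Ordinal Hj = i2) //; apply: val_inj.
Qed.
Lemma sum3 (V : nmodType) (F : 'I_3 -> V) : \sum_(i < 3) F i = F i0 + F i1 + F i2.
Proof. rewrite !big_ord_recr big_ord0 /= add0r. by congr (_ + _ + _); congr (F _); apply: val_inj. Qed.
Lemma mulS_h1r (K : fieldType) (w x y : 'rV[K]_3) :
  mulS (h1r_alg w) x y = (x 0 i0 * y 0 i2 + x 0 i2 * y 0 i0) *: w.
Proof. rewrite /mulS !sum3 /h1r_alg /=. by rewrite !scaler0 !addr0 !add0r scalerDl. Qed.
Lemma ebE (K : fieldType) (k j : 'I_3) : (ebasis k : 'rV[K]_3) 0 j = (val j == val k)%:R.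
Proof. by rewrite /ebasis mxE eqxx. Qed.
Lemma mulS_eacp (K : fieldType) a b (x y : 'rV[K]_3) :
  mulS (eacp3 a b) x y = (x 0 i0 * y 0 i2 + x 0 i2 * y 0 i0) *: eacp_hr a b ord0
     + (x 0 i1 * y 0 i2 + x 0 i2 * y 0 i1) *: eacp_hr a b ord_max.
Proof.
have u0 : unlift (@ord_max 2) i0 = Some (ord0 : 'I_2).
  by rewrite (_ : i0 = lift ord_max ord0) ?liftK //; apply: val_inj.
have u1 : unlift (@ord_max 2) i1 = Some (ord_max : 'I_2).
  by rewrite (_ : i1 = lift ord_max ord_max) ?liftK //; apply: val_inj.
have u2 : unlift (@ord_max 2) i2 = None.
  by rewrite (_ : i2 = ord_max) ?unlift_none //; apply: val_inj.
rewrite /mulS !sum3 /eacp3 u0 u1 u2.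
by rewrite !scaler0 !addr0 !add0r !scalerDl addrACA.
Qed.
Definition M3 (K : fieldType) (l : seq (seq K)) : 'M[K]_3 :=
  \matrix_(i, j) nth 0 (nth [::] l i) j.
Lemma mulmx3E (K : fieldType) m n (A : 'M[K]_(m,3)) (B : 'M[K]_(3,n)) i j :
  (A *m B) i j = A i i0 * B i0 j + A i i1 * B i1 j + A i i2 * B i2 j.
Proof. by rewrite mxE sum3. Qed.
Lemma unit3 (K : fieldType) (l m : seq (seq K)) :
  (forall i j, (M3 l *m M3 m) i j = (i == j)%:R) -> M3 l \in unitmx.
Proof.
move=> H; have [] // := @mulmx1_unit _ _ (M3 l) (M3 m).
by apply/matrixP=> i j; rewrite H mxE.
Qed.

Ltac m3unit := let i := fresh "i" in let j := fresh "j" in intros i j; rewrite mulmx3E !mxE; revert i j;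
  apply: ord3P; apply: ord3P => /=; by field.

Lemma iso_h1r (K : fieldType) (c : strc K 3) (S : 'rV[K]_3 -> 'rV[K]_3 -> K)
  (w t : 'rV[K]_3) (f : 'M[K]_3) (cc : K) :
  f \in unitmx -> (forall x y, mulS c x y = S x y *: w) -> w *m f = cc *: t ->
  (forall x y, (x *m f) 0 i0 * (y *m f) 0 i2 + (x *m f) 0 i2 * (y *m f) 0 i0
      = cc * S x y) ->
  alg_iso c (h1r_alg t).
Proof.
move=> uf Hc Hw HS; exists f; split => // x y.
by rewrite mulS_h1r HS Hc -scalemxAl Hw scalerA mulrC.
Qed.

Lemma unit_neq0 (K : fieldType) (w : 'rV[K]_3) (f : 'M[K]_3) :
  f \in unitmx -> w != 0 -> w *m f != 0.
Proof.
move=> uf; apply: contra => /eqP H; apply/eqP.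
by rewrite -(mulmxK uf w) H mul0mx.
Qed.

Lemma iso_trans (K : fieldType) n (c d e : strc K n) :
  alg_iso c d -> alg_iso d e -> alg_iso c e.
Proof.
move=> [f [uf Hf]] [g [ug Hg]]; exists (f *m g); split.
  by rewrite unitmx_mul uf ug.
by move=> x y; rewrite !mulmxA Hg Hf.
Qed.

Lemma iso_sym (K : fieldType) n (c d : strc K n) : alg_iso c d -> alg_iso d c.
Proof.
move=> [f [uf Hf]]; exists (invmx f); split; first by rewrite unitmx_inv.
move=> x y; have := Hf (x *m invmx f) (y *m invmx f).
by rewrite !mulmxKV // => ->; rewrite mulmxK.
Qed.

Lemma inv3 (K : fieldType) n (c d : strc K n) : alg_iso c d ->
  (forall x y z, mulS c (mulS c x y) z = 0) -> forall x y z, mulS d (mulS d x y) z = 0.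
Proof.
move=> [f [uf Hf]] H x y z.
by rewrite -[x](mulmxKV uf) -[y](mulmxKV uf) -[z](mulmxKV uf) Hf Hf H mul0mx.
Qed.

Lemma inv4 (K : fieldType) n (c d : strc K n) : alg_iso c d ->
  (forall x y u v, mulS c (mulS c x y) (mulS c u v) = 0) ->
  forall x y u v, mulS d (mulS d x y) (mulS d u v) = 0.
Proof.
move=> [f [uf Hf]] H x y u v.
by rewrite -[x](mulmxKV uf) -[y](mulmxKV uf) -[u](mulmxKV uf) -[v](mulmxKV uf)
  Hf Hf Hf H mul0mx.
Qed.


Lemma h1E (K : fieldType) j : h1 K 0 j = (val j == 0%N)%:R.
Proof. by rewrite /h1 ebE. Qed.
Lemma h2E (K : fieldType) j : h2 K 0 j = (val j == 1%N)%:R.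
Proof. by rewrite /h2 ebE. Qed.
Lemma rrE (K : fieldType) j : rr K 0 j = (val j == 2%N)%:R.
Proof. by rewrite /rr ebE. Qed.

Lemma step1 (K : fieldType) a b : sq_dim1 (eacp3 a b) ->
  exists w' : 'rV[K]_3, w' != 0 /\ alg_iso (eacp3 a b) (h1r_alg w').
Proof.
case=> w [w0 [Hall [x [y Hxy]]]].
have [k0 Hk0] := Hall (h1 K) (rr K).
have [k1 Hk1] := Hall (h2 K) (rr K).
rewrite mulS_eacp !h1E !rrE /= in Hk0; rewrite mulS_eacp !h2E !rrE /= in Hk1.
rewrite !(mul1r, mul0r, mulr0, addr0, add0r, scale1r, scale0r) in Hk0 Hk1.
have HS : forall x y, mulS (eacp3 a b) x y =
   ((x 0 i0 * y 0 i2 + x 0 i2 * y 0 i0) * k0 + (x 0 i1 * y 0 i2 + x 0 i2 * y 0 i1) * k1) *: w.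
  by move=> x' y'; rewrite mulS_eacp Hk0 Hk1 !scalerA scalerDl.
case: (eqVneq k0 0) => [k00 | k0n].
  have k1n : k1 != 0.
    apply/eqP => k10; move: Hxy; rewrite HS k00 k10 !mulr0 addr0 scale0r eqxx //.
  set f := M3 [:: [::0;1;0]; [::k1;0;0]; [::0;0;1]].
  have uf : f \in unitmx.
    apply: (@unit3 _ _ [:: [::0;k1^-1;0]; [::1;0;0]; [::0;0;1]]); m3unit.
  exists (w *m f); split; first exact: unit_neq0.
  apply: (iso_h1r (cc := 1) uf HS); first by rewrite scale1r.
  move=> x' y'; rewrite !mulmx3E !mxE /= k00; ring.
set f := M3 [:: [::k0;0;0]; [::k1;1;0]; [::0;0;1]].
have uf : f \in unitmx.
  apply: (@unit3 _ _ [:: [::k0^-1;0;0]; [::-k1/k0;1;0]; [::0;0;1]]); m3unit.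
exists (w *m f); split; first exact: unit_neq0.
apply: (iso_h1r (cc := 1) uf HS); first by rewrite scale1r.
move=> x' y'; rewrite !mulmx3E !mxE /=; ring.
Qed.

Lemma step2 (K : fieldType) (w : 'rV[K]_3) : w != 0 ->
  alg_iso (h1r_alg w) (C1 K) \/ alg_iso (h1r_alg w) (C2 K) \/ alg_iso (h1r_alg w) (C3 K).
Proof.
move=> w0.
have HS := @mulS_h1r K w.
set p := w 0 i0; set q := w 0 i1; set s := w 0 i2.
case: (eqVneq s 0) => [s0 | sn].
  case: (eqVneq p 0) => [p0 | pn].
    have qn : q != 0.
      apply/eqP => q0; move/eqP: w0; apply; apply/rowP; apply: ord3P; rewrite mxE //.
    right; left.
    set f := M3 [:: [::q;0;0]; [::0;1;0]; [::0;0;1]].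
    have uf : f \in unitmx.
      apply: (@unit3 _ _ [:: [::q^-1;0;0]; [::0;1;0]; [::0;0;1]]); m3unit.
    apply: (iso_h1r (cc := q) uf HS).
      apply/rowP; apply: ord3P; rewrite mulmx3E !mxE /= -/p -/q -/s ?p0 ?s0; ring.
    move=> x' y'; rewrite !mulmx3E !mxE /=; ring.
  left.
  set f := M3 [:: [::0;-q;1]; [::0;p;0]; [::p;0;0]].
  have uf : f \in unitmx.
    apply: (@unit3 _ _ [:: [::0;0;p^-1]; [::0;p^-1;0]; [::1;q/p;0]]); m3unit.
  apply: (iso_h1r (cc := p) uf HS).
    apply/rowP; apply: ord3P; rewrite mulmx3E !mxE /= -/p -/q -/s ?s0; ring.
  move=> x' y'; rewrite !mulmx3E !mxE /=; ring.
case: (eqVneq p 0) => [p0 | pn].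
  left.
  set f := M3 [:: [::s;0;0]; [::0;s;0]; [::0;-q;1]].
  have uf : f \in unitmx.
    apply: (@unit3 _ _ [:: [::s^-1;0;0]; [::0;s^-1;0]; [::0;q/s;1]]); m3unit.
  apply: (iso_h1r (cc := s) uf HS).
    apply/rowP; apply: ord3P; rewrite mulmx3E !mxE /= -/p -/q -/s ?p0; ring.
  move=> x' y'; rewrite !mulmx3E !mxE /=; ring.
right; right.
set f := M3 [:: [::s;0;0]; [::0;s;0]; [::0;-q;p]].
have uf : f \in unitmx.
  have spn : s * p != 0 by rewrite mulf_neq0.
  apply: (@unit3 _ _ [:: [::s^-1;0;0]; [::0;s^-1;0]; [::0;q/(s * p);p^-1]]); intros i j; rewrite mulmx3E !mxE; revert i j; apply: ord3P; apply: ord3P => /=; by field; rewrite ?pn ?sn.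
apply: (iso_h1r (cc := s * p) uf HS).
  apply/rowP; apply: ord3P; rewrite mulmx3E !mxE /= -/p -/q -/s; ring.
move=> x' y'; rewrite !mulmx3E !mxE /=; ring.
Qed.

Lemma C2_nil (K : fieldType) x y z : mulS (C2 K) (mulS (C2 K) x y) z = 0.
Proof. by rewrite /C2 !mulS_h1r !mxE /= !(mulr0, mul0r, addr0) scale0r. Qed.
Lemma C1_nil4 (K : fieldType) x y u v : mulS (C1 K) (mulS (C1 K) x y) (mulS (C1 K) u v) = 0.
Proof. by rewrite /C1 !mulS_h1r !mxE /= !(mulr0, mul0r, mulr1, addr0) scale0r. Qed.
Lemma C1_nn (K : fieldType) : mulS (C1 K) (mulS (C1 K) (h1 K) (rr K)) (h1 K) != 0.
Proof.
apply/eqP => /rowP /(_ i2); rewrite /C1 !mulS_h1r !mxE /=.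
by rewrite !(mulr0, mul0r, mulr1, mul1r, addr0, add0r) => /eqP; rewrite oner_eq0.
Qed.
Lemma C3_nn (K : fieldType) : mulS (C3 K) (mulS (C3 K) (h1 K) (rr K)) (rr K) != 0.
Proof.
apply/eqP => /rowP /(_ i0); rewrite /C3 !mulS_h1r !mxE /=.
by rewrite !(mulr0, mul0r, mulr1, mul1r, addr0, add0r) => /eqP; rewrite oner_eq0.
Qed.
Lemma C3_nn4 (K : fieldType) : (2%:R : K) != 0 ->
  mulS (C3 K) (mulS (C3 K) (h1 K) (rr K)) (mulS (C3 K) (h1 K) (rr K)) != 0.
Proof.
move=> two; apply/eqP => /rowP /(_ i0); rewrite /C3 !mulS_h1r !mxE /=.
rewrite !(mulr0, mul0r, mulr1, mul1r, addr0, add0r) => H.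
by move: two; rewrite (_ : (2%:R : K) = 1 + 1) ?H ?eqxx //; ring.
Qed.
Lemma two (K : fieldType) : 2%N \notin [pchar K] -> (2%:R : K) != 0.
Proof. by rewrite inE /=. Qed.

Theorem mainTheorem14 (K : fieldType) (a : 'I_2 -> 'I_2 -> K) (b : 'I_2 -> K) :
  2%N \notin [pchar K] ->
  sq_dim1 (eacp3 a b) ->
  (alg_iso (eacp3 a b) (C1 K) \/ alg_iso (eacp3 a b) (C2 K) \/
   alg_iso (eacp3 a b) (C3 K)) /\
  ~ alg_iso (C1 K) (C2 K) /\ ~ alg_iso (C1 K) (C3 K) /\ ~ alg_iso (C2 K) (C3 K).
Proof.
move=> Hc Hsq; split.
  have [w' [w0 Hw]] := step1 Hsq.
  case: (step2 w0) => [H|[H|H]]; [left|right; left|right; right]; exact: iso_trans Hw H.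
split.
  move=> H; have := inv3 (iso_sym H) (@C2_nil K) (h1 K) (rr K) (h1 K).
  by move/eqP; rewrite (negbTE (C1_nn K)).
split.
  move=> H; have := inv4 H (@C1_nil4 K) (h1 K) (rr K) (h1 K) (rr K).
  by move/eqP; rewrite (negbTE (C3_nn4 (two Hc))).
move=> H; have := inv3 H (@C2_nil K) (h1 K) (rr K) (rr K).
by move/eqP; rewrite (negbTE (C3_nn K)).
Qed.
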